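(* In the Cucker–Smale setting below, for all $n\in\mathbb{N}_0$, $$d_V(t_{2n+1})\le\left(1-\int_{t_{2n}}^{t_{2n+1}}\phi(s)\,ds\right)d_V(t_{2n}),$$ where for $t\ge0$, $\tilde\psi_t:=\min\{\tilde\psi(r):r\in[0,\max_{s\in[0,t]}d_X(s)]\}$ and $\phi(t):=\min\left\{e^{-\tilde KT}\tilde\psi_t,\frac{e^{-\tilde KT}}{T}\right\}$.
   Context: Setting: $N\ge2$; $\tilde\psi:\mathbb{R}\to\mathbb{R}$ positive, bounded, continuous, with $\tilde K:=\|\tilde\psi\|_\infty$ and $\int_0^\infty\min_{r\in[0,x]}\tilde\psi(r)dx=+\infty$; $\{t_n\}_{n\in\mathbb{N}_0}$ increasing, nonnegative, $t_0=0$, $t_n\to\infty$, with $t_{2n+2}-t_{2n+1}<\frac{\ln2}{\tilde K}$ and $t_{2n+1}-t_{2n}>\frac1{\tilde K}$ for all $n$, and $\sum_{p\ge0}\ln\frac{e^{\tilde K(t_{2p+2}-t_{2p+1})}}{2-e^{\tilde K(t_{2p+2}-t_{2p+1})}}<\infty$. A number $T>\frac{\ln2}{\tilde K}$ is fixed such that $t_{2n+1}-t_{2n}\le T$ for all $n\in\mathbb{N}_0$. $\alpha(0)=1$, $\alpha=1$ on $(t_{2n},t_{2n+1})$, $\alpha=-1$ on $[t_{2n+1},t_{2n+2}]$. $\{(x_i,v_i)\}$ solves $x_i'=v_i$, $v_i'(t)=\frac1{N-1}\sum_{j\ne i}\alpha(t)\tilde\psi(|x_i(t)-x_j(t)|)(v_j(t)-v_i(t))$,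 $t>0$, with given initial data in $\mathbb{R}^d$ (continuous, $C^1$ on each $(t_n,t_{n+1})$). $d_X(t):=\max_{i,j}|x_i(t)-x_j(t)|$, $d_V(t):=\max_{i,j}|v_i(t)-v_j(t)|$. *)

(* Defs.v *)
From Stdlib Require Import Reals Lra Lia.
From Coquelicot Require Import Coquelicot.
Open Scope R_scope.

Fixpoint sumn (n : nat) (f : nat -> R) : R :=
  match n with O => 0 | S m => sumn m f + f m end.

(* max_{k < n} f k, with default 0 (used only for nonnegative quantities
   whose maximum is attained and >= 0) *)
Fixpoint fmax (n : nat) (f : nat -> R) : R :=
  match n with O => 0 | S m => Rmax (fmax m f) (f m) end.

(* Vectors of R^d are represented as functions nat -> R (coordinates k < d);
   Euclidean norm. *)
Definition vnorm (d : nat) (w : nat -> R) : R :=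
  sqrt (sumn d (fun k => (w k) ^ 2)).

(* Agents are indexed by i < N; z i t is the state of agent i at time t. *)
Definition diam (N d : nat) (z : nat -> R -> nat -> R) (t : R) : R :=
  fmax N (fun i => fmax N (fun j => vnorm d (fun k => z i t k - z j t k))).

Definition cont_nonneg (f : R -> R) : Prop :=
  forall t, 0 <= t -> forall eps, 0 < eps ->
    exists delta, 0 < delta /\
      forall s, 0 <= s -> Rabs (s - t) < delta -> Rabs (f s - f t) < eps.

(* max_{s in [0,t]} f s  (as a supremum; it is attained for continuous f) *)
Definition max_on_0 (f : R -> R) (t : R) : R :=
  real (Lub_Rbar (fun y => exists s, 0 <= s <= t /\ y = f s)).

(* min_{r in [0,a]} g r  (as an infimum; it is attained for continuous g) *)
Definition min_on_0 (g : R -> R) (a : R) : R :=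
  real (Glb_Rbar (fun y => exists r, 0 <= r <= a /\ y = g r)).

Definition supnorm (g : R -> R) : R :=
  real (Lub_Rbar (fun y => exists r, y = Rabs (g r))).

Definition psi_t (psi : R -> R) (N d : nat) (x : nat -> R -> nat -> R) (t : R) : R :=
  min_on_0 psi (max_on_0 (diam N d x) t).

Definition phi (psi : R -> R) (K T : R) (N d : nat) (x : nat -> R -> nat -> R) (t : R) : R :=
  Rmin (exp (- K * T) * psi_t psi N d x t) (exp (- K * T) / T).

(* Main.v *)
Require Import Defs.
From Stdlib Require Import Reals.
From Coquelicot Require Import Coquelicot.
From Stdlib Require Import Lra Lia Classical.
Open Scope R_scope.

Lemma sumn_S n f : sumn (S n) f = sumn n f + f n.
Proof. reflexivity. Qed.

Lemma sumn_ext n f g : (forall k, (k < n)%nat -> f k = g k) -> sumn n f = sumn n g.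
Proof. induction n; simpl; intros H; auto. rewrite IHn; [rewrite H|]; auto; intros; apply H; lia. Qed.

Lemma sumn_le n f g : (forall k, (k < n)%nat -> f k <= g k) -> sumn n f <= sumn n g.
Proof. induction n; simpl; intros H; [lra|]. assert (f n <= g n) by (apply H; lia).
 assert (sumn n f <= sumn n g) by (apply IHn; intros; apply H; lia). lra. Qed.

Lemma sumn_plus n f g : sumn n (fun k => f k + g k) = sumn n f + sumn n g.
Proof. induction n; simpl; [lra|]. rewrite IHn; lra. Qed.

Lemma sumn_minus n f g : sumn n (fun k => f k - g k) = sumn n f - sumn n g.
Proof. induction n; simpl; [lra|]. rewrite IHn; lra. Qed.

Lemma sumn_scal n c f : sumn n (fun k => c * f k) = c * sumn n f.
Proof. induction n; simpl; [lra|]. rewrite IHn; lra. Qed.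

Lemma sumn_const n c : sumn n (fun _ => c) = INR n * c.
Proof. induction n; simpl sumn; [simpl; lra|]. rewrite IHn, S_INR; lra. Qed.

Lemma sumn_zero n : sumn n (fun _ => 0) = 0.
Proof. rewrite sumn_const; lra. Qed.

Lemma sumn_swap n m (F : nat -> nat -> R) :
  sumn n (fun i => sumn m (fun j => F i j)) = sumn m (fun j => sumn n (fun i => F i j)).
Proof. induction n; simpl. now rewrite sumn_zero. rewrite IHn, <- sumn_plus. reflexivity. Qed.

Lemma sumn_skip n i f : (i < n)%nat ->
  sumn n (fun k => if Nat.eq_dec k i then 0 else f k) = sumn n f - f i.
Proof.
  induction n; intros Hi; [lia|]. simpl.
  destruct (Nat.eq_dec n i).
  - subst. rewrite (sumn_ext _ _ f). lra. intros k Hk. destruct (Nat.eq_dec k i); [lia|auto].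
  - rewrite IHn by lia. lra.
Qed.

Lemma sumn_nonneg n f : (forall k, (k < n)%nat -> 0 <= f k) -> 0 <= sumn n f.
Proof. intros H. rewrite <- (sumn_zero n). apply sumn_le; auto. Qed.

Lemma fmax_ge n f k : (k < n)%nat -> f k <= fmax n f.
Proof. induction n; intros Hk; [lia|]. simpl. destruct (Nat.eq_dec k n).
 subst; apply Rmax_r. eapply Rle_trans; [apply IHn; lia| apply Rmax_l]. Qed.

Lemma fmax_nonneg n f : 0 <= fmax n f.
Proof. induction n; simpl; [lra|]. eapply Rle_trans; [apply IHn|apply Rmax_l]. Qed.

Lemma fmax_le n f B : 0 <= B -> (forall k, (k < n)%nat -> f k <= B) -> fmax n f <= B.
Proof. induction n; simpl; intros HB H; auto. apply Rmax_lub. apply IHn; auto. apply H; lia. Qed.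

Fixpoint mx (n : nat) (f : nat -> R) : R :=
  match n with O => f O | S m => Rmax (mx m f) (f (S m)) end.
Fixpoint mn (n : nat) (f : nat -> R) : R :=
  match n with O => f O | S m => Rmin (mn m f) (f (S m)) end.

Lemma mx_ge n f k : (k <= n)%nat -> f k <= mx n f.
Proof. induction n; intros Hk; simpl. replace k with O by lia; lra.
 destruct (Nat.eq_dec k (S n)). subst; apply Rmax_r. eapply Rle_trans; [apply IHn; lia| apply Rmax_l]. Qed.
Lemma mn_le n f k : (k <= n)%nat -> mn n f <= f k.
Proof. induction n; intros Hk; simpl. replace k with O by lia; lra.
 destruct (Nat.eq_dec k (S n)). subst; apply Rmin_r. eapply Rle_trans; [apply Rmin_l|apply IHn; lia]. Qed.
Lemma mx_att n f : exists k, (k <= n)%nat /\ mx n f = f k.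
Proof. induction n; simpl. exists O; auto. destruct IHn as [k [Hk E]].
 unfold Rmax; destruct Rle_dec. exists (S n); auto. exists k; split; auto. Qed.
Lemma mn_att n f : exists k, (k <= n)%nat /\ mn n f = f k.
Proof. induction n; simpl. exists O; auto. destruct IHn as [k [Hk E]].
 unfold Rmin; destruct Rle_dec. exists k; split; auto. exists (S n); auto. Qed.

Lemma vnorm_nonneg d w : 0 <= vnorm d w.
Proof. apply sqrt_pos. Qed.

Lemma vnorm_sq d w : vnorm d w * vnorm d w = sumn d (fun k => w k ^ 2).
Proof. unfold vnorm. apply sqrt_sqrt. apply sumn_nonneg. intros; apply pow2_ge_0. Qed.

Lemma cs_aux n a b lam : 0 < lam ->
  sumn n (fun k => a k * b k) <= (lam * sumn n (fun k => a k ^ 2) + / lam * sumn n (fun k => b k ^ 2)) / 2.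
Proof.
  intros Hl.
  assert (E : (lam * sumn n (fun k => a k ^ 2) + / lam * sumn n (fun k => b k ^ 2)) / 2
    = sumn n (fun k => / 2 * (lam * a k ^ 2 + / lam * b k ^ 2))).
  { rewrite sumn_scal, sumn_plus, !sumn_scal. lra. }
  rewrite E. apply sumn_le. intros k _.
  assert (0 < / lam) by (apply Rinv_0_lt_compat; auto).
  assert (lam * / lam = 1) by (field; lra).
  assert (0 <= lam * (a k - / lam * b k)^2) by (apply Rmult_le_pos; [lra|apply pow2_ge_0]).
  assert (lam * (a k - / lam * b k)^2 = lam * a k ^ 2 - 2 * (a k * b k) + / lam * b k ^ 2) by (field; lra).
  lra.
Qed.

Lemma cauchy_schwarz n a b :
  sumn n (fun k => a k * b k) <= vnorm n a * vnorm n b.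
Proof.
  set (A := sumn n (fun k => a k ^ 2)). set (B := sumn n (fun k => b k ^ 2)).
  assert (HA : 0 <= A) by (apply sumn_nonneg; intros; apply pow2_ge_0).
  assert (HB : 0 <= B) by (apply sumn_nonneg; intros; apply pow2_ge_0).
  assert (Hc := cs_aux n a b). fold A B in Hc.
  unfold vnorm; fold A B.
  set (s := sumn n (fun k => a k * b k)) in *.
  destruct (Rle_lt_or_eq_dec 0 A HA) as [HA'|HA'];
  destruct (Rle_lt_or_eq_dec 0 B HB) as [HB'|HB'].
  - assert (sA := sqrt_lt_R0 A HA'). assert (sB := sqrt_lt_R0 B HB').
    specialize (Hc (sqrt B / sqrt A)).
    assert (E1 : sqrt B / sqrt A * A = sqrt A * sqrt B).
    { rewrite <- (sqrt_sqrt A) at 2 by lra. field. lra. }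
    assert (E2 : / (sqrt B / sqrt A) * B = sqrt A * sqrt B).
    { rewrite <- (sqrt_sqrt B) at 2 by lra. field. lra. }
    rewrite E1, E2 in Hc. apply Rle_trans with ((sqrt A * sqrt B + sqrt A * sqrt B)/2); [|lra].
    apply Hc. apply Rdiv_lt_0_compat; lra.
  - rewrite <- HB', sqrt_0, Rmult_0_r.
    apply Rnot_lt_le; intro Hs. specialize (Hc (2 * s / (A + 1))).
    rewrite <- HB' in Hc.
    assert (H: 0 < 2 * s / (A + 1)) by (apply Rdiv_lt_0_compat; lra).
    specialize (Hc H). replace ((2 * s / (A + 1) * A + / (2 * s / (A + 1)) * 0) / 2) with (s * A / (A+1)) in Hc by (field; lra).
    apply (Rmult_le_compat_r (A+1)) in Hc; [|lra].
    replace (s * A / (A+1) * (A+1)) with (s * A) in Hc by (field; lra). nra.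
  - rewrite <- HA', sqrt_0, Rmult_0_l.
    apply Rnot_lt_le; intro Hs. specialize (Hc ((B + 1) / (2 * s))).
    rewrite <- HA' in Hc.
    assert (H: 0 < (B+1) / (2 * s)) by (apply Rdiv_lt_0_compat; lra).
    specialize (Hc H). replace (((B + 1) / (2 * s) * 0 + / ((B + 1) / (2 * s)) * B) / 2) with (s * B / (B+1)) in Hc by (field; lra).
    apply (Rmult_le_compat_r (B+1)) in Hc; [|lra].
    replace (s * B / (B+1) * (B+1)) with (s * B) in Hc by (field; lra). nra.
  - rewrite <- HA', sqrt_0, Rmult_0_l.
    apply Rnot_lt_le; intro Hs. specialize (Hc 1). rewrite <- HA', <- HB' in Hc. lra.
Qed.


Lemma cont_eps f x : continuity_pt f x <->
  (forall eps, 0 < eps -> exists del, 0 < del /\ forall y, Rabs (y - x) < del -> Rabs (f y - f x) < eps).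
Proof.
  split.
  - intros H eps He. destruct (H eps He) as [del [Hd H2]]. exists del; split; auto.
    intros y Hy. destruct (Req_dec y x) as [->|Hn].
    + rewrite Rminus_eq_0, Rabs_R0; auto.
    + apply (H2 y). split; [split; [exact I| auto]|]. exact Hy.
  - intros H eps He. destruct (H eps He) as [del [Hd H2]]. exists del; split; auto.
    intros y [_ Hy]. apply H2. exact Hy.
Qed.

Lemma le_eps x y : (forall eta, 0 < eta -> x <= y + eta) -> x <= y.
Proof. intros H. apply Rnot_lt_le; intro. specialize (H ((x - y)/2)). lra. Qed.

Lemma dini_mono (F : R -> R) a b : a < b ->
  (forall t, a <= t <= b -> continuity_pt F t) ->
  (forall t, a < t < b -> forall eps, 0 < eps -> exists del, 0 < del /\
      forall h, 0 < h < del -> F (t + h) <= F t + eps * h) ->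
  F b <= F a.
Proof.
  intros Hab Hc Hd.
  assert (Main : forall eps, 0 < eps -> F b <= F a + eps * (b - a) + eps).
  { intros eps He.
    set (E := fun s => a <= s <= b /\ forall r, a <= r <= s -> F r <= F a + eps * (r - a) + eps).
    assert (Ea : E a).
    { split; [lra|]. intros r Hr. replace r with a by lra. lra. }
    assert (Eb : bound E). { exists b. intros s [Hs _]. lra. }
    destruct (completeness E Eb (ex_intro _ a Ea)) as [c [Hub Hlub]].
    assert (Hac : a <= c) by (apply Hub; auto).
    assert (Hcb : c <= b) by (apply Hlub; intros s [Hs _]; lra).
    assert (C1 : forall r, a <= r < c -> F r <= F a + eps * (r - a) + eps).
    { intros r Hr.
      assert (Hex : exists s, E s /\ r < s).
      { apply NNPP; intro Hn. assert (c <= r); [|lra]. apply Hlub. intros s Es.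
        apply Rnot_lt_le; intro; apply Hn; exists s; auto. }
      destruct Hex as [s [[_ Hs] Hrs]]. apply Hs; lra. }
    assert (C2 : E c).
    { split; [lra|]. intros r Hr. destruct (Rlt_or_le r c) as [Hrc|Hrc]; [apply C1; lra|].
      replace r with c by lra. clear r Hr Hrc.
      destruct (Req_dec c a) as [->|Hca]; [lra|].
      apply le_eps; intros eta Heta.
      destruct (proj1 (cont_eps F c) (Hc c (conj Hac Hcb)) eta Heta) as [del [Hdel Hd2]].
      set (r := Rmax a (c - del/2)).
      assert (Hr1 : a <= r < c). { unfold r; split; [apply Rmax_l|]. apply Rmax_lub_lt; lra. }
      assert (Hr2 : c - del/2 <= r) by apply Rmax_r.
      specialize (Hd2 r). assert (Rabs (r - c) < del) by (rewrite Rabs_left; lra).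
      specialize (Hd2 H). apply Rabs_def2 in Hd2. specialize (C1 r Hr1).
      assert (eps * (r - a) <= eps * (c - a)) by (apply Rmult_le_compat_l; lra). lra. }
    assert (C3 : c = b).
    { destruct (Req_dec c b) as [|Hcb']; auto. exfalso.
      destruct (Req_dec c a) as [Hca|Hca].
      - destruct (proj1 (cont_eps F a) (Hc a (conj (Rle_refl a) (Rlt_le _ _ Hab))) eps He) as [del [Hdel Hd2]].
        set (s := Rmin b (a + del/2)).
        assert (Es : E s).
        { split. unfold s; split; [apply Rmin_glb; lra| apply Rmin_l].
          intros r Hr. assert (s <= a + del/2) by apply Rmin_r.
          assert (Rabs (r - a) < del) by (rewrite Rabs_right; lra).
          specialize (Hd2 r H0). apply Rabs_def2 in Hd2.
          assert (0 <= eps * (r - a)) by (apply Rmult_le_pos; lra). lra. }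
        assert (s <= c) by (apply Hub; auto).
        assert (a < s); [|lra]. unfold s; apply Rmin_glb_lt; lra.
      - assert (a < c) by (destruct Hac; [auto| congruence]).
        assert (c < b) by (destruct Hcb; [auto| congruence]).
        assert (Hin : a < c < b) by lra.
        destruct (Hd c Hin eps He) as [del [Hdel Hd2]].
        set (s := Rmin b (c + del/2)).
        assert (Es : E s).
        { split. unfold s; split; [apply Rmin_glb; lra| apply Rmin_l].
          intros r Hr. destruct (Rle_or_lt r c) as [Hrc|Hrc]. apply (proj2 C2); lra.
          assert (s <= c + del/2) by apply Rmin_r.
          specialize (Hd2 (r - c)). replace (c + (r - c)) with r in Hd2 by ring.
          assert (F r <= F c + eps * (r - c)) by (apply Hd2; lra).
          assert (F c <= F a + eps * (c - a) + eps) by (apply (proj2 C2); lra). lra. }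
        assert (s <= c) by (apply Hub; auto).
        assert (c < s); [|lra]. unfold s; apply Rmin_glb_lt; lra. }
    subst c. apply (proj2 C2). lra. }
  apply Rnot_lt_le; intro Hlt.
  set (eps := (F b - F a) / (2 * (b - a + 1))).
  assert (Heps : 0 < eps) by (apply Rdiv_lt_0_compat; lra).
  specialize (Main eps Heps).
  assert (eps * (b - a) + eps = (F b - F a)/2) by (unfold eps; field; lra). lra.
Qed.


Lemma ind_int (h : R -> R) a b : a <= b -> (forall s, h s = 0 \/ h s = 1) ->
  (forall x y, x <= y -> h y <= h x) -> ex_RInt h a b.
Proof.
  intros Hab H01 Hmon.
  set (E := fun s => s = a \/ (a <= s <= b /\ h s = 1)).
  assert (Eb : bound E). { exists b. intros s [->|[Hs _]]; lra. }
  destruct (completeness E Eb (ex_intro _ a (or_introl eq_refl))) as [c [Hub Hlub]].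
  assert (Hac : a <= c) by (apply Hub; left; auto).
  assert (Hcb : c <= b) by (apply Hlub; intros s [->|[Hs _]]; lra).
  apply (ex_RInt_Chasles _ a c b).
  - apply (ex_RInt_ext (fun _ => 1)); [|apply ex_RInt_const].
    intros x Hx. rewrite Rmin_left in Hx by lra. rewrite Rmax_right in Hx by lra.
    assert (Hex : exists s, E s /\ x < s).
    { apply NNPP; intro Hn. assert (c <= x); [|lra]. apply Hlub. intros s Es.
      apply Rnot_lt_le; intro; apply Hn; exists s; auto. }
    destruct Hex as [s [[->|[Hs Hs1]] Hxs]]; [lra|].
    specialize (Hmon x s (Rlt_le _ _ Hxs)). destruct (H01 x); lra.
  - apply (ex_RInt_ext (fun _ => 0)); [|apply ex_RInt_const].
    intros x Hx. rewrite Rmin_left in Hx by lra. rewrite Rmax_right in Hx by lra.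
    destruct (H01 x) as [|H1]; auto.
    assert (x <= c) by (apply Hub; right; split; [lra|auto]). lra.
Qed.

Lemma count_lem m sig : 0 <= sig ->
  (INR m <= sig -> sumn m (fun k => if Rle_dec (INR (S k)) sig then 1 else 0) = INR m) /\
  (sig < INR m -> sig - 1 < sumn m (fun k => if Rle_dec (INR (S k)) sig then 1 else 0) <= sig).
Proof.
  intros Hs. induction m; rewrite ?sumn_S.
  - simpl. split; intros; lra.
  - destruct IHm as [I1 I2]. pose proof (pos_INR m). split.
    + intros Hm. rewrite S_INR in Hm. rewrite I1 by lra.
      destruct Rle_dec as [r|r]; rewrite S_INR in *; lra.
    + intros Hm. rewrite S_INR in Hm. destruct (Rle_or_lt (INR m) sig) as [Hm2|Hm2].
      * rewrite I1 by lra. destruct Rle_dec as [r|r]; rewrite S_INR in *; lra.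
      * specialize (I2 Hm2). destruct Rle_dec as [r|r]; rewrite S_INR in *; lra.
Qed.

Lemma sumn_int (F : nat -> R -> R) m a b : (forall k, (k < m)%nat -> ex_RInt (F k) a b) ->
  ex_RInt (fun s => sumn m (fun k => F k s)) a b.
Proof.
  induction m; intros H.
  - apply (ex_RInt_const a b 0).
  - simpl. apply (ex_RInt_plus (fun s => sumn m (fun k => F k s)) (F m)).
    apply IHm; intros; apply H; lia. apply H; lia.
Qed.

Definition clamp (a b s : R) := Rmax a (Rmin b s).

Lemma clamp_in a b s : a <= b -> a <= clamp a b s <= b.
Proof. intros; unfold clamp. split. apply Rmax_l. apply Rmax_lub; [lra|apply Rmin_l]. Qed.

Lemma clamp_id a b s : a <= s <= b -> clamp a b s = s.
Proof. intros; unfold clamp. rewrite Rmin_right by lra. rewrite Rmax_right; lra. Qed.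

Lemma clamp_mon a b x y : x <= y -> clamp a b x <= clamp a b y.
Proof. intros; unfold clamp. apply Rle_max_compat_l. apply Rle_min_compat_l. auto. Qed.

Lemma clamp_lip a b x y : a <= b -> Rabs (clamp a b x - clamp a b y) <= Rabs (x - y).
Proof.
  intros Hab. unfold clamp, Rmax, Rmin.
  repeat destruct Rle_dec; unfold Rabs; repeat destruct Rcase_abs; lra.
Qed.

Lemma ex_RInt_noninc (f : R -> R) a b : a <= b ->
  (forall x y, a <= x -> x <= y -> y <= b -> f y <= f x) -> ex_RInt f a b.
Proof.
  intros Hab Hmon.
  set (fe := fun s => f (clamp a b s)).
  apply (ex_RInt_ext fe).
  { intros x Hx. rewrite Rmin_left in Hx by lra. rewrite Rmax_right in Hx by lra.
    unfold fe; rewrite clamp_id; auto; lra. }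
  assert (Hfe : forall x y, x <= y -> fe y <= fe x).
  { intros x y Hxy; unfold fe. apply Hmon. apply clamp_in; auto. apply clamp_mon; auto. apply clamp_in; auto. }
  set (lo := f b). set (hi := f a).
  assert (Hb : forall s, lo <= fe s <= hi).
  { intros s; unfold lo, hi, fe. destruct (clamp_in a b s Hab). split; apply Hmon; lra. }
  destruct (archimed (hi - lo)) as [Hup _].
  set (M0 := Z.to_nat (up (hi - lo))).
  assert (HM0 : hi - lo <= INR M0).
  { unfold M0. rewrite INR_IZR_INZ, Znat.Z2Nat.id. lra. apply le_IZR. pose proof (Hb a). lra. }
  set (gq := fun (n : nat) (s : R) => lo + / INR (S n) *
       sumn (S n * M0) (fun k => if Rle_dec (lo + INR (S k) / INR (S n)) (fe s) then 1 else 0)).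
  assert (Hgq : forall n s, Rabs (gq n s - fe s) <= / INR (S n)).
  { intros n s. set (nn := INR (S n)). assert (Hnn : 0 < nn) by (apply lt_0_INR; lia).
    set (sig := (fe s - lo) * nn).
    assert (Hsig0 : 0 <= sig) by (apply Rmult_le_pos; [pose proof (Hb s); lra|lra]).
    destruct (count_lem (S n * M0) sig Hsig0) as [C1 C2].
    assert (E : sumn (S n * M0) (fun k => if Rle_dec (lo + INR (S k) / INR (S n)) (fe s) then 1 else 0)
             = sumn (S n * M0) (fun k => if Rle_dec (INR (S k)) sig then 1 else 0)).
    { apply sumn_ext. intros k _.
      assert (Hd : lo + INR (S k) / INR (S n) <= fe s <-> INR (S k) <= sig).
      { unfold sig. fold nn. split; intros H.
        - assert (INR (S k) = (INR (S k) / nn) * nn) by (field; lra).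
          rewrite H0. apply Rmult_le_compat_r; lra.
        - assert (INR (S k) / nn <= fe s - lo); [|lra].
          apply (Rmult_le_reg_r nn); auto. replace (INR (S k) / nn * nn) with (INR (S k)) by (field; lra). lra. }
      destruct Rle_dec as [r1|r1]; destruct Rle_dec as [r2|r2]; auto; tauto. }
    unfold gq. rewrite E. fold nn.
    set (cnt := sumn (S n * M0) (fun k => if Rle_dec (INR (S k)) sig then 1 else 0)) in *.
    assert (Hsm : sig <= INR (S n * M0)).
    { unfold sig. rewrite mult_INR. fold nn. rewrite Rmult_comm. apply Rmult_le_compat_l; [lra|].
      pose proof (Hb s). lra. }
    assert (Ediff : lo + / nn * cnt - fe s = (cnt - sig) / nn) by (unfold sig; field; lra).
    rewrite Ediff. unfold Rdiv. rewrite Rabs_mult, (Rabs_right (/ nn)) by (apply Rle_ge, Rlt_le, Rinv_0_lt_compat; auto).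
    assert (Rabs (cnt - sig) <= 1); [|assert (0 < / nn) by (apply Rinv_0_lt_compat; auto); nra].
    destruct (Rle_or_lt (INR (S n * M0)) sig) as [H1|H1].
    - rewrite (C1 H1). replace sig with (INR (S n * M0)) by lra. rewrite Rminus_eq_0, Rabs_R0; lra.
    - specialize (C2 H1). apply Rabs_le; lra. }
  assert (Hint : forall n, ex_RInt (gq n) a b).
  { intros n. unfold gq.
    apply (ex_RInt_plus (fun _ => lo) (fun s => / INR (S n) * _)). apply ex_RInt_const.
    apply (ex_RInt_scal (fun s => sumn _ _)).
    apply (sumn_int (fun k s => if Rle_dec (lo + INR (S k) / INR (S n)) (fe s) then 1 else 0)).
    intros k _. apply ind_int; auto.
    - intros s. destruct Rle_dec; auto.
    - intros x y Hxy. specialize (Hfe x y Hxy). do 2 destruct Rle_dec; lra. }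
  destruct (filterlim_RInt gq a b eventually eventually_filter fe (fun n => RInt (gq n) a b)) as [If [_ HIf]].
  - intros n. apply RInt_correct. apply Hint.
  - intros P [eps HP].
    destruct (archimed (/ eps)) as [Hup2 _].
    assert (He : 0 < / eps) by (apply Rinv_0_lt_compat; apply cond_pos).
    exists (Z.to_nat (up (/ eps))). intros n Hn. apply HP. intros t.
    change (Rabs (gq n t - fe t) < eps).
    eapply Rle_lt_trans; [apply Hgq|].
    assert (HN : / eps < INR (S n)).
    { apply le_INR in Hn. rewrite INR_IZR_INZ, Znat.Z2Nat.id in Hn. rewrite S_INR. lra.
      apply le_IZR. lra. }
    pose proof (cond_pos eps).
    replace (pos eps) with (/ / eps) by (field; lra).
    apply Rinv_lt_contravar; auto. apply Rmult_lt_0_compat; lra.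
  - exists If. exact HIf.
Qed.


Lemma sumn_affine n al be q : sumn n (fun k => al * q k + be) = al * sumn n q + INR n * be.
Proof. rewrite sumn_plus, sumn_scal, sumn_const. ring. Qed.

Lemma deriv_bound (N' : nat) (a : nat -> nat -> R) (q : nat -> R) psi K i j :
  (1 <= N')%nat -> (i <= N')%nat -> (j <= N')%nat -> 0 <= psi -> psi <= K ->
  (forall k l, (k <= N')%nat -> (l <= N')%nat -> psi <= a k l <= K) ->
  / INR N' * sumn (S N') (fun k => if Nat.eq_dec k i then 0 else a i k * (q k - q i))
  - / INR N' * sumn (S N') (fun k => if Nat.eq_dec k j then 0 else a j k * (q k - q j))
  <= - psi * (mx N' q - mn N' q) + 2 * K * ((mx N' q - mn N' q) - (q i - q j)).
Proof.
  intros HN Hi Hj Hp HK Ha.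
  set (M := mx N' q). set (m := mn N' q).
  assert (HqM : forall k, (k <= N')%nat -> q k <= M) by (intros; apply mx_ge; auto).
  assert (Hqm : forall k, (k <= N')%nat -> m <= q k) by (intros; apply mn_le; auto).
  set (Sq := sumn (S N') q).
  assert (HA : sumn (S N') (fun k => if Nat.eq_dec k i then 0 else a i k * (q k - q i))
     <= psi * Sq + INR (S N') * (- psi * M + K * (M - q i)) - (psi * (q i - M) + K * (M - q i))).
  { eapply Rle_trans.
    - apply (sumn_le _ _ (fun k => if Nat.eq_dec k i then 0 else psi * q k + (- psi * M + K * (M - q i)))).
      intros k Hk. destruct Nat.eq_dec; [lra|].
      assert (Hk' : (k <= N')%nat) by lia. destruct (Ha i k Hi Hk').
      pose proof (HqM k Hk'). pose proof (HqM i Hi).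
      assert (a i k * (q k - q i) = a i k * (q k - M) + a i k * (M - q i)) by ring.
      assert (a i k * (q k - M) <= psi * (q k - M)) by (rewrite (Rmult_comm (a i k)), (Rmult_comm psi); apply Rmult_le_compat_neg_l; lra).
      assert (a i k * (M - q i) <= K * (M - q i)) by (apply Rmult_le_compat_r; lra).
      lra.
    - rewrite sumn_skip by lia. rewrite sumn_affine. fold Sq. lra. }
  assert (HB : psi * Sq + INR (S N') * (- psi * m - K * (q j - m)) - (psi * (q j - m) - K * (q j - m))
     <= sumn (S N') (fun k => if Nat.eq_dec k j then 0 else a j k * (q k - q j))).
  { eapply Rle_trans.
    2: { apply (sumn_le _ (fun k => if Nat.eq_dec k j then 0 else psi * q k + (- psi * m - K * (q j - m)))).
      intros k Hk. destruct Nat.eq_dec; [lra|].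
      assert (Hk' : (k <= N')%nat) by lia. destruct (Ha j k Hj Hk').
      pose proof (Hqm k Hk'). pose proof (Hqm j Hj).
      assert (a j k * (q k - q j) = a j k * (q k - m) - a j k * (q j - m)) by ring.
      assert (psi * (q k - m) <= a j k * (q k - m)) by (apply Rmult_le_compat_r; lra).
      assert (a j k * (q j - m) <= K * (q j - m)) by (apply Rmult_le_compat_r; lra).
      lra. }
    rewrite sumn_skip by lia. rewrite sumn_affine. fold Sq. lra. }
  rewrite S_INR in HA, HB.
  assert (HN1 : 1 <= INR N') by (apply (le_INR 1); auto).
  set (w := / INR N').
  assert (Hw : w * INR N' = 1) by (unfold w; field; lra).
  assert (Hw0 : 0 < w) by (unfold w; apply Rinv_0_lt_compat; lra).
  assert (Hw1 : w <= 1) by (unfold w; rewrite <- Rinv_1; apply Rinv_le_contravar; lra).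
  set (D := M - m). set (e := (M - q i) + (q j - m)).
  assert (HD : 0 <= D) by (unfold D; pose proof (HqM i Hi); pose proof (Hqm i Hi); lra).
  assert (He : 0 <= e) by (unfold e; pose proof (HqM i Hi); pose proof (Hqm j Hj); lra).
  set (A := sumn (S N') (fun k => if Nat.eq_dec k i then 0 else a i k * (q k - q i))) in *.
  set (B := sumn (S N') (fun k => if Nat.eq_dec k j then 0 else a j k * (q k - q j))) in *.
  assert (HAB : A - B <= - psi * (INR N' + 1) * D + INR N' * K * e + psi * e) by (unfold D, e; lra).
  replace (M - m - (q i - q j)) with e by (unfold e; ring). fold D.
  assert (w * A - w * B <= w * (- psi * (INR N' + 1) * D + INR N' * K * e + psi * e)).
  { rewrite <- Rmult_minus_distr_l. apply Rmult_le_compat_l; lra. }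
  assert (E : w * (- psi * (INR N' + 1) * D + INR N' * K * e + psi * e) = - psi * D - w * psi * D + K * e + w * psi * e).
  { replace (w * (- psi * (INR N' + 1) * D + INR N' * K * e + psi * e)) with
      (- psi * D * (w * INR N') - w * psi * D + K * e * (w * INR N') + w * psi * e) by ring.
    rewrite Hw. ring. }
  assert (0 <= w * psi * D) by (apply Rmult_le_pos; [apply Rmult_le_pos|]; lra).
  assert (w * psi * e <= K * e) by (apply Rmult_le_compat_r; [lra|]; nra).
  replace (D - (q i - q j)) with e by (unfold e, D; ring). lra.
Qed.


Lemma abs_le_split x a : Rabs x <= a -> - a <= x <= a.
Proof. unfold Rabs; destruct Rcase_abs; lra. Qed.

Lemma unif_delta (n : nat) (P : nat -> R -> Prop) :
  (forall i, (i <= n)%nat -> exists del, 0 < del /\ forall h, 0 < h < del -> P i h) ->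
  exists del, 0 < del /\ forall i, (i <= n)%nat -> forall h, 0 < h < del -> P i h.
Proof.
  induction n; intros H.
  - destruct (H O (le_n 0)) as [d [Hd Hd2]]. exists d; split; auto. intros i Hi; replace i with O by lia; auto.
  - destruct IHn as [d1 [Hd1 H1]]. intros; apply H; lia.
    destruct (H (S n) (le_n _)) as [d2 [Hd2 H2]].
    exists (Rmin d1 d2); split. apply Rmin_glb_lt; auto.
    intros i Hi h Hh. assert (Rmin d1 d2 <= d1) by apply Rmin_l. assert (Rmin d1 d2 <= d2) by apply Rmin_r.
    destruct (Nat.eq_dec i (S n)). subst; apply H2; lra. apply H1; [lia|lra].
Qed.

Lemma deriv_eps f x l : derivable_pt_lim f x l -> forall eps, 0 < eps ->
  exists del, 0 < del /\ forall h, 0 < h < del -> Rabs (f (x + h) - f x - h * l) <= eps * h.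
Proof.
  intros H eps He. destruct (H eps He) as [d Hd]. exists d; split; [apply cond_pos|].
  intros h Hh. assert (h <> 0) by lra. assert (Rabs h < d) by (rewrite Rabs_right; lra).
  specialize (Hd h H0 H1).
  replace (f (x + h) - f x - h * l) with (h * ((f (x + h) - f x) / h - l)) by (field; lra).
  rewrite Rabs_mult, Rabs_right by lra. rewrite Rmult_comm. apply Rmult_le_compat_r; lra.
Qed.

Lemma P_dini (N' : nat) (p dp : nat -> R -> R) (psi K t : R) :
  0 < K ->
  (forall i, (i <= N')%nat -> derivable_pt_lim (p i) t (dp i t)) ->
  (forall i j, (i <= N')%nat -> (j <= N')%nat ->
     dp i t - dp j t <= - psi * (mx N' (fun k => p k t) - mn N' (fun k => p k t))
        + 2 * K * ((mx N' (fun k => p k t) - mn N' (fun k => p k t)) - (p i t - p j t))) ->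
  forall eps, 0 < eps -> exists del, 0 < del /\ forall h, 0 < h < del ->
    mx N' (fun k => p k (t + h)) - mn N' (fun k => p k (t + h))
    <= (mx N' (fun k => p k t) - mn N' (fun k => p k t)) * (1 - h * psi) + eps * h.
Proof.
  intros HK Hd Hb eps He.
  destruct (unif_delta N' (fun i h => Rabs (p i (t + h) - p i t - h * dp i t) <= eps / 2 * h)) as [d1 [Hd1 H1]].
  { intros i Hi. apply deriv_eps; auto. lra. }
  exists (Rmin d1 (/ (2 * K))). split. apply Rmin_glb_lt; auto. apply Rinv_0_lt_compat; lra.
  intros h Hh. assert (Rmin d1 (/ (2 * K)) <= d1) by apply Rmin_l.
  assert (Hh2 : h <= / (2 * K)) by (assert (Rmin d1 (/ (2 * K)) <= / (2*K)) by apply Rmin_r; lra).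
  assert (HKh : 2 * K * h <= 1).
  { apply (Rmult_le_compat_l (2 * K)) in Hh2; [|lra]. rewrite Rinv_r in Hh2; lra. }
  destruct (mx_att N' (fun k => p k (t + h))) as [i [Hi Ei]].
  destruct (mn_att N' (fun k => p k (t + h))) as [j [Hj Ej]].
  rewrite Ei, Ej.
  specialize (H1 i Hi h ltac:(lra)) as Hpi. specialize (H1 j Hj h ltac:(lra)) as Hpj.
  apply abs_le_split in Hpi. apply abs_le_split in Hpj.
  specialize (Hb i j Hi Hj).
  set (P := mx N' (fun k => p k t) - mn N' (fun k => p k t)) in *.
  set (e := P - (p i t - p j t)) in *.
  assert (He0 : 0 <= e).
  { unfold e, P. pose proof (mx_ge N' (fun k => p k t) i Hi). pose proof (mn_le N' (fun k => p k t) j Hj). simpl in *. lra. }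
  assert (h * (dp i t - dp j t) <= h * (- psi * P + 2 * K * e)) by (apply Rmult_le_compat_l; lra).
  assert (e * (2 * K * h - 1) <= 0).
  { rewrite <- (Rmult_0_r e). apply Rmult_le_compat_l; lra. }
  assert (h * (- psi * P + 2 * K * e) = - (P * h * psi) + e * (2 * K * h)) by ring.
  assert (P * (1 - h * psi) = P - P * h * psi) by ring.
  assert (e * (2 * K * h - 1) = e * (2 * K * h) - e) by ring.
  assert (e = P - (p i t - p j t)) by reflexivity. assert (h * (dp i t - dp j t) = h * dp i t - h * dp j t) by ring. lra.
Qed.

Lemma exp_le x y : x <= y -> exp x <= exp y.
Proof. intros [H|H]. left; apply exp_increasing; auto. subst; lra. Qed.

Lemma one_minus_exp y : (1 - y) * exp y <= 1.
Proof.
  pose proof (exp_ineq1_le (- y)). pose proof (exp_pos y).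
  rewrite exp_Ropp in H.
  assert ((1 - y) * exp y <= / exp y * exp y) by (apply Rmult_le_compat_r; lra).
  rewrite Rinv_l in H1; lra.
Qed.

Lemma F_dini (P G : R -> R) (g psi t : R) :
  (forall s, 0 <= P s) -> 0 <= g -> g <= psi ->
  (forall eps, 0 < eps -> exists del, 0 < del /\ forall h, 0 < h < del ->
      P (t + h) <= P t * (1 - h * psi) + eps * h) ->
  (exists del, 0 < del /\ forall h, 0 < h < del -> G (t + h) <= G t + h * g) ->
  forall eps, 0 < eps -> exists del, 0 < del /\ forall h, 0 < h < del ->
    P (t + h) * exp (G (t + h)) <= P t * exp (G t) + eps * h.
Proof.
  intros HP Hg Hgp HDP [d2 [Hd2 HG]] eps He.
  set (c := exp (G t) * exp g).
  assert (Hc : 0 < c) by (apply Rmult_lt_0_compat; apply exp_pos).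
  destruct (HDP (eps / c)) as [d1 [Hd1 H1]]. apply Rdiv_lt_0_compat; auto.
  exists (Rmin (Rmin d1 d2) 1). split. repeat apply Rmin_glb_lt; lra.
  intros h Hh.
  assert (Rmin (Rmin d1 d2) 1 <= Rmin d1 d2) by apply Rmin_l.
  assert (Rmin d1 d2 <= d1) by apply Rmin_l. assert (Rmin d1 d2 <= d2) by apply Rmin_r.
  assert (Rmin (Rmin d1 d2) 1 <= 1) by apply Rmin_r.
  specialize (H1 h ltac:(lra)). specialize (HG h ltac:(lra)).
  assert (E1 : P (t + h) * exp (G (t + h)) <= P (t + h) * (exp (G t) * exp (h * g))).
  { rewrite <- exp_plus. apply Rmult_le_compat_l; auto. apply exp_le; auto. }
  assert (Hgt : 0 < exp (G t) * exp (h * g)) by (apply Rmult_lt_0_compat; apply exp_pos).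
  assert (E2 : P (t + h) * (exp (G t) * exp (h * g)) <= (P t * (1 - h * psi) + eps / c * h) * (exp (G t) * exp (h * g))).
  { apply Rmult_le_compat_r; lra. }
  assert (E3 : P t * (1 - h * psi) * exp (h * g) <= P t).
  { pose proof (one_minus_exp (h * g)). pose proof (HP t). pose proof (exp_pos (h * g)).
    assert (P t * (1 - h * psi) <= P t * (1 - h * g)).
    { apply Rmult_le_compat_l; auto. assert (h * g <= h * psi) by (apply Rmult_le_compat_l; lra). lra. }
    apply Rle_trans with (P t * (1 - h * g) * exp (h * g)). apply Rmult_le_compat_r; lra.
    rewrite Rmult_assoc. rewrite <- (Rmult_1_r (P t)) at 2. apply Rmult_le_compat_l; auto. }
  assert (E4 : exp (h * g) <= exp g).
  { apply exp_le. rewrite <- (Rmult_1_l g) at 2. apply Rmult_le_compat_r; lra. }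
  assert (E5 : eps / c * h * (exp (G t) * exp (h * g)) <= eps * h).
  { apply Rle_trans with (eps / c * h * c). apply Rmult_le_compat_l.
    apply Rmult_le_pos; [apply Rlt_le, Rdiv_lt_0_compat; auto | lra].
    unfold c. apply Rmult_le_compat_l; [left; apply exp_pos|auto].
    right. field. lra. }
  assert (E6 : (P t * (1 - h * psi) + eps / c * h) * (exp (G t) * exp (h * g))
     = (P t * (1 - h * psi) * exp (h * g)) * exp (G t) + eps / c * h * (exp (G t) * exp (h * g))) by ring.
  assert (P t * (1 - h * psi) * exp (h * g) * exp (G t) <= P t * exp (G t)).
  { apply Rmult_le_compat_r; [left; apply exp_pos|auto]. }
  lra.
Qed.


Lemma lub_fin (E : R -> Prop) x0 B : E x0 -> (forall y, E y -> y <= B) ->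
  (forall y, E y -> y <= real (Lub_Rbar E)) /\ real (Lub_Rbar E) <= B.
Proof.
  intros H0 HB. destruct (Lub_Rbar_correct E) as [Hub Hl].
  assert (HlB := Hl (Finite B) HB). assert (Hx := Hub x0 H0).
  destruct (Lub_Rbar E) as [l| |]; simpl in *; try contradiction.
  split; auto.
Qed.

Lemma glb_fin (E : R -> Prop) x0 L : E x0 -> (forall y, E y -> L <= y) ->
  (forall y, E y -> real (Glb_Rbar E) <= y) /\ L <= real (Glb_Rbar E).
Proof.
  intros H0 HL. destruct (Glb_Rbar_correct E) as [Hlb Hg].
  assert (HgL := Hg (Finite L) HL). assert (Hx := Hlb x0 H0).
  destruct (Glb_Rbar E) as [l| |]; simpl in *; try contradiction.
  split; auto.
Qed.

Lemma cont_clamp f a b : cont_nonneg f -> 0 <= a -> a <= b ->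
  forall c, continuity_pt (fun s => f (clamp a b s)) c.
Proof.
  intros Hf Ha Hab c. apply cont_eps. intros eps He.
  destruct (clamp_in a b c Hab) as [Hc1 Hc2].
  destruct (Hf (clamp a b c) ltac:(lra) eps He) as [del [Hd H]].
  exists del; split; auto. intros y Hy.
  destruct (clamp_in a b y Hab). apply H. lra.
  eapply Rle_lt_trans; [apply clamp_lip; auto| auto].
Qed.

Lemma cont_bound f t : cont_nonneg f -> 0 <= t ->
  exists B, forall s, 0 <= s <= t -> Rabs (f s) <= B.
Proof.
  intros Hf Ht.
  assert (Hc := cont_clamp f 0 t Hf (Rle_refl 0) Ht).
  destruct (continuity_ab_maj (fun s => f (clamp 0 t s)) 0 t Ht (fun c _ => Hc c)) as [M1 [H1 _]].
  destruct (continuity_ab_min (fun s => f (clamp 0 t s)) 0 t Ht (fun c _ => Hc c)) as [M2 [H2 _]].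
  exists (Rmax (Rabs (f (clamp 0 t M1))) (Rabs (f (clamp 0 t M2)))).
  intros s Hs. specialize (H1 s Hs). specialize (H2 s Hs). simpl in *.
  rewrite (clamp_id 0 t s Hs) in H1, H2.
  pose proof (Rmax_l (Rabs (f (clamp 0 t M1))) (Rabs (f (clamp 0 t M2)))).
  pose proof (Rmax_r (Rabs (f (clamp 0 t M1))) (Rabs (f (clamp 0 t M2)))).
  revert H H0 H1 H2. unfold Rabs; repeat destruct Rcase_abs; lra.
Qed.

Lemma fin_bound n (Q : nat -> R -> Prop) :
  (forall i B B', B <= B' -> Q i B -> Q i B') ->
  (forall i, (i < n)%nat -> exists B, Q i B) -> exists B, forall i, (i < n)%nat -> Q i B.
Proof.
  intros Hm. induction n; intros H.
  - exists 0. intros; lia.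
  - destruct IHn as [B1 H1]. intros; apply H; lia.
    destruct (H n (Nat.lt_succ_diag_r n)) as [B2 H2].
    exists (Rmax B1 B2). intros i Hi. destruct (Nat.eq_dec i n).
    + subst. apply (Hm _ B2); auto. apply Rmax_r.
    + apply (Hm _ B1). apply Rmax_l. apply H1; lia.
Qed.

Lemma diam_bounded N d (x : nat -> R -> nat -> R) :
  (forall i k, (i < N)%nat -> (k < d)%nat -> cont_nonneg (fun s => x i s k)) ->
  forall t, 0 <= t -> exists B, forall s, 0 <= s <= t -> diam N d x s <= B.
Proof.
  intros Hc t Ht.
  destruct (fin_bound N (fun i B => forall k, (k < d)%nat -> forall s, 0 <= s <= t -> Rabs (x i s k) <= B)) as [B HB].
  { intros i B B' HBB H k Hk s Hs. specialize (H k Hk s Hs). lra. }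
  { intros i Hi. apply (fin_bound d (fun k B => forall s, 0 <= s <= t -> Rabs (x i s k) <= B)).
    - intros k B B' HBB H s Hs. specialize (H s Hs). lra.
    - intros k Hk. apply cont_bound; auto. }
  exists (sqrt (INR d * (2 * B) ^ 2)). intros s Hs.
  apply fmax_le. apply sqrt_pos. intros i Hi.
  apply fmax_le. apply sqrt_pos. intros j Hj.
  unfold vnorm. apply sqrt_le_1_alt. rewrite <- sumn_const. apply sumn_le.
  intros k Hk. pose proof (HB i Hi k Hk s Hs). pose proof (HB j Hj k Hk s Hs).
  apply abs_le_split in H. apply abs_le_split in H0.
  assert (-(2*B) <= x i s k - x j s k <= 2 * B) by lra. nra.
Qed.

Section MO.
Variable f : R -> R.
Hypothesis Hbd : forall t, 0 <= t -> exists B, forall s, 0 <= s <= t -> f s <= B.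

Lemma mo_ge t s : 0 <= s <= t -> f s <= max_on_0 f t.
Proof.
  intros Hs. destruct (Hbd t ltac:(lra)) as [B HB].
  set (E := fun y => exists s, 0 <= s <= t /\ y = f s).
  assert (HE : E (f s)) by (exists s; auto).
  assert (HEB : forall y, E y -> y <= B) by (intros y [r [Hr ->]]; auto).
  exact (proj1 (lub_fin E _ B HE HEB) _ HE).
Qed.

Lemma mo_mon t t' : 0 <= t -> t <= t' -> max_on_0 f t <= max_on_0 f t'.
Proof.
  intros Ht Htt.
  set (E := fun y => exists s, 0 <= s <= t /\ y = f s).
  assert (HE : E (f 0)) by (exists 0; split; [lra|auto]).
  assert (HEB : forall y, E y -> y <= max_on_0 f t') by (intros y [r [Hr ->]]; apply mo_ge; lra).
  exact (proj2 (lub_fin E _ _ HE HEB)).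
Qed.
End MO.

Lemma mi_le g a r : (forall r, 0 < g r) -> 0 <= a -> 0 <= r <= a -> min_on_0 g a <= g r.
Proof.
  intros Hg Ha Hr.
  set (E := fun y => exists s, 0 <= s <= a /\ y = g s).
  assert (HE : E (g r)) by (exists r; auto).
  assert (HEL : forall y, E y -> 0 <= y) by (intros y [s [Hs ->]]; left; auto).
  exact (proj1 (glb_fin E _ 0 HE HEL) _ HE).
Qed.

Lemma mi_nonneg g a : (forall r, 0 < g r) -> 0 <= a -> 0 <= min_on_0 g a.
Proof.
  intros Hg Ha.
  set (E := fun y => exists s, 0 <= s <= a /\ y = g s).
  assert (HE : E (g 0)) by (exists 0; split; [lra|auto]).
  assert (HEL : forall y, E y -> 0 <= y) by (intros y [s [Hs ->]]; left; auto).
  exact (proj2 (glb_fin E _ 0 HE HEL)).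
Qed.

Lemma mi_mon g a a' : (forall r, 0 < g r) -> 0 <= a -> a <= a' -> min_on_0 g a' <= min_on_0 g a.
Proof.
  intros Hg Ha Haa.
  set (E := fun y => exists s, 0 <= s <= a /\ y = g s).
  assert (HE : E (g 0)) by (exists 0; split; [lra|auto]).
  assert (HEL : forall y, E y -> min_on_0 g a' <= y) by (intros y [s [Hs ->]]; apply mi_le; auto; lra).
  exact (proj2 (glb_fin E _ _ HE HEL)).
Qed.

Lemma supnorm_ge g : (exists M, forall r, Rabs (g r) <= M) -> forall r, Rabs (g r) <= supnorm g.
Proof.
  intros [M HM] r.
  set (E := fun y => exists s, y = Rabs (g s)).
  assert (HE : E (Rabs (g r))) by (exists r; auto).
  assert (HEB : forall y, E y -> y <= M) by (intros y [s ->]; auto).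
  exact (proj1 (lub_fin E _ M HE HEB) _ HE).
Qed.


Lemma Rmax_formula a b : Rmax a b = (a + b + Rabs (a - b)) / 2.
Proof. unfold Rmax, Rabs; destruct Rle_dec; destruct Rcase_abs; lra. Qed.
Lemma Rmin_formula a b : Rmin a b = (a + b - Rabs (a - b)) / 2.
Proof. unfold Rmin, Rabs; destruct Rle_dec; destruct Rcase_abs; lra. Qed.

Lemma cont_max2 f g c : continuity_pt f c -> continuity_pt g c ->
  continuity_pt (fun s => Rmax (f s) (g s)) c.
Proof.
  intros Hf Hg. apply (continuity_pt_ext (fun s => (f s + g s + Rabs (f s - g s)) * / 2)).
  { intros; rewrite Rmax_formula; reflexivity. }
  apply (continuity_pt_mult (fun s => f s + g s + Rabs (f s - g s)) (fun _ => / 2)).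
  2: apply continuity_pt_const; intros ? ?; reflexivity.
  apply (continuity_pt_plus (fun s => f s + g s) (fun s => Rabs (f s - g s))).
  apply (continuity_pt_plus f g); auto.
  apply (continuity_pt_comp (fun s => f s - g s) Rabs).
  apply (continuity_pt_minus f g); auto. apply Rcontinuity_abs.
Qed.

Lemma cont_min2 f g c : continuity_pt f c -> continuity_pt g c ->
  continuity_pt (fun s => Rmin (f s) (g s)) c.
Proof.
  intros Hf Hg. apply (continuity_pt_ext (fun s => (f s + g s - Rabs (f s - g s)) * / 2)).
  { intros; rewrite Rmin_formula; reflexivity. }
  apply (continuity_pt_mult (fun s => f s + g s - Rabs (f s - g s)) (fun _ => / 2)).
  2: apply continuity_pt_const; intros ? ?; reflexivity.
  apply (continuity_pt_minus (fun s => f s + g s) (fun s => Rabs (f s - g s))).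
  apply (continuity_pt_plus f g); auto.
  apply (continuity_pt_comp (fun s => f s - g s) Rabs).
  apply (continuity_pt_minus f g); auto. apply Rcontinuity_abs.
Qed.

Lemma cont_mx n (F : nat -> R -> R) c : (forall i, (i <= n)%nat -> continuity_pt (F i) c) ->
  continuity_pt (fun s => mx n (fun i => F i s)) c.
Proof.
  induction n; intros H; simpl. apply H; lia.
  apply (cont_max2 (fun s => mx n (fun i => F i s)) (F (S n))). apply IHn; intros; apply H; lia. apply H; lia.
Qed.

Lemma cont_mn n (F : nat -> R -> R) c : (forall i, (i <= n)%nat -> continuity_pt (F i) c) ->
  continuity_pt (fun s => mn n (fun i => F i s)) c.
Proof.
  induction n; intros H; simpl. apply H; lia.
  apply (cont_min2 (fun s => mn n (fun i => F i s)) (F (S n))). apply IHn; intros; apply H; lia. apply H; lia.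
Qed.

Lemma cont_sumn n (F : nat -> R -> R) c : (forall i, (i < n)%nat -> continuity_pt (F i) c) ->
  continuity_pt (fun s => sumn n (fun i => F i s)) c.
Proof.
  induction n; intros H; simpl. apply continuity_pt_const; intros ? ?; reflexivity.
  apply (continuity_pt_plus (fun s => sumn n (fun i => F i s)) (F n)). apply IHn; intros; apply H; lia. apply H; lia.
Qed.

Lemma cont_lip f c L : (forall y, Rabs (f y - f c) <= L * Rabs (y - c)) -> continuity_pt f c.
Proof.
  intros H. apply cont_eps. intros eps He. exists (eps / (Rabs L + 1)). split.
  apply Rdiv_lt_0_compat; [auto|pose proof (Rabs_pos L); lra].
  intros y Hy. eapply Rle_lt_trans; [apply H|].
  pose proof (Rabs_pos L). pose proof (Rabs_pos (y - c)). pose proof (Rle_abs L).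
  apply Rle_lt_trans with ((Rabs L + 1) * Rabs (y - c)). apply Rmult_le_compat_r; lra.
  apply (Rmult_lt_compat_l (Rabs L + 1)) in Hy; [|lra].
  replace ((Rabs L + 1) * (eps / (Rabs L + 1))) with eps in Hy by (field; lra). lra.
Qed.

Lemma deriv_sumn n (F : nat -> R -> R) (l : nat -> R) t :
  (forall k, (k < n)%nat -> derivable_pt_lim (F k) t (l k)) ->
  derivable_pt_lim (fun s => sumn n (fun k => F k s)) t (sumn n l).
Proof.
  induction n; intros H; simpl.
  - apply (derivable_pt_lim_const 0).
  - apply (derivable_pt_lim_plus (fun s => sumn n (fun k => F k s)) (F n)).
    apply IHn; intros; apply H; lia. apply H; lia.
Qed.

Lemma exp_bound c B : 2 <= c -> 0 <= B -> c * B <= 1 -> exp (- (c * B)) <= 1 - B.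
Proof.
  intros Hc HB HcB. set (y := c * B).
  assert (Hy : 0 <= y) by (unfold y; apply Rmult_le_pos; lra).
  pose proof (exp_ineq1_le y). rewrite exp_Ropp.
  apply Rle_trans with (/ (1 + y)). apply Rinv_le_contravar; lra.
  apply Rle_trans with (1 - y / 2).
  - assert (y <= 1) by exact HcB. assert (0 <= y * (1 - y)) by (apply Rmult_le_pos; lra).
    assert ((1 + y) * (1 - y/2) >= 1) by nra.
    apply (Rmult_le_reg_l (1 + y)); [lra|]. rewrite Rinv_r by lra. lra.
  - unfold y. assert (2 * B <= c * B) by (apply Rmult_le_compat_r; lra). lra.
Qed.


Theorem proposition7p13
  (N d : nat) (psi : R -> R) (K : R) (tt : nat -> R) (T : R)
  (alpha : R -> R) (x v : nat -> R -> nat -> R) :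
  (2 <= N)%nat ->
  (* hypotheses on tilde psi *)
  (forall r, 0 < psi r) ->
  (exists M, forall r, Rabs (psi r) <= M) ->
  (forall r, continuity_pt psi r) ->
  K = supnorm psi ->
  is_lim (fun X => RInt (fun y => min_on_0 psi y) 0 X) p_infty p_infty ->
  (* hypotheses on the switching times *)
  (forall n, tt n < tt (S n)) ->
  tt 0%nat = 0 ->
  is_lim_seq tt p_infty ->
  (forall n, tt (2 * n + 2)%nat - tt (2 * n + 1)%nat < ln 2 / K) ->
  (forall n, tt (2 * n + 1)%nat - tt (2 * n)%nat > 1 / K) ->
  ex_series (fun p => ln (exp (K * (tt (2 * p + 2)%nat - tt (2 * p + 1)%nat))
                          / (2 - exp (K * (tt (2 * p + 2)%nat - tt (2 * p + 1)%nat))))) ->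
  T > ln 2 / K ->
  (forall n, tt (2 * n + 1)%nat - tt (2 * n)%nat <= T) ->
  (* the switching signal alpha *)
  alpha 0 = 1 ->
  (forall n t, tt (2 * n)%nat < t < tt (2 * n + 1)%nat -> alpha t = 1) ->
  (forall n t, tt (2 * n + 1)%nat <= t <= tt (2 * n + 2)%nat -> alpha t = -1) ->
  (* the solution: continuous on [0,oo), C^1 on each (t_n, t_{n+1}) *)
  (forall i k, (i < N)%nat -> (k < d)%nat -> cont_nonneg (fun s => x i s k)) ->
  (forall i k, (i < N)%nat -> (k < d)%nat -> cont_nonneg (fun s => v i s k)) ->
  (forall n t, tt n < t < tt (S n) -> forall i k, (i < N)%nat -> (k < d)%nat ->
     is_derive (fun s => x i s k) t (v i t k)) ->
  (forall n t, tt n < t < tt (S n) -> forall i k, (i < N)%nat -> (k < d)%nat ->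
     is_derive (fun s => v i s k) t
       (/ INR (N - 1) *
        sumn N (fun j => if Nat.eq_dec j i then 0 else
                 alpha t * psi (vnorm d (fun l => x i t l - x j t l))
                   * (v j t k - v i t k)))) ->
  (* conclusion *)
  forall n : nat,
    diam N d v (tt (2 * n + 1)%nat)
      <= (1 - RInt (phi psi K T N d x) (tt (2 * n)%nat) (tt (2 * n + 1)%nat))
         * diam N d v (tt (2 * n)%nat).
Proof.
  intros HN Hpos Hbdd Hcont HK Hint Hinc H0 Hlim Hsw1 Hsw2 Hser HT HTn Ha0 Ha1 Ham Hxc Hvc Hxd Hvd n.
  clear Hint Hlim Hsw1 Hsw2 Hser Ha0 Ham Hxd Hcont.
  assert (Httpos : forall m, 0 <= tt m).
  { induction m. lra. pose proof (Hinc m). lra. }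
  set (t0 := tt (2 * n)%nat) in *. set (t1 := tt (2 * n + 1)%nat) in *.
  assert (Ht01 : t0 < t1).
  { pose proof (Hinc (2 * n)%nat) as Hi. replace (S (2 * n)) with (2 * n + 1)%nat in Hi by lia. exact Hi. }
  assert (Ht0 : 0 <= t0) by apply Httpos.
  assert (Hτ : t1 - t0 <= T) by apply HTn.
  assert (HpsiK : forall r, psi r <= K).
  { intros r. rewrite HK. pose proof (supnorm_ge psi Hbdd r). rewrite Rabs_right in H by (apply Rle_ge, Rlt_le, Hpos). lra. }
  assert (HKpos : 0 < K) by (pose proof (Hpos 0); pose proof (HpsiK 0); lra).
  assert (Hln2 : 0 < ln 2) by (rewrite <- ln_1; apply ln_increasing; lra).
  assert (HKT : ln 2 < K * T).
  { apply (Rmult_lt_compat_l K) in HT; auto. unfold Rdiv in HT.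
    replace (K * (ln 2 * / K)) with (ln 2) in HT by (field; lra). lra. }
  assert (HTpos : 0 < T).
  { apply Rnot_le_lt; intro. assert (K * T <= 0) by (rewrite <- (Rmult_0_r K); apply Rmult_le_compat_l; lra). lra. }
  set (c := exp (K * T)).
  assert (Hc2 : 2 <= c) by (unfold c; rewrite <- (exp_ln 2) by lra; left; apply exp_increasing; auto).
  set (ce := exp (- K * T)).
  assert (Hce : ce * c = 1) by (unfold ce, c; rewrite <- exp_plus; replace (- K * T + K * T) with 0 by ring; apply exp_0).
  assert (Hcepos : 0 < ce) by apply exp_pos.
  assert (Dbd := diam_bounded N d x Hxc).
  set (Mx := max_on_0 (diam N d x)).
  assert (HMx0 : forall t, 0 <= t -> 0 <= Mx t).
  { intros t Ht. apply Rle_trans with (diam N d x 0). apply fmax_nonneg. apply mo_ge; auto. lra. }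
  assert (HMxmon : forall t t', 0 <= t -> t <= t' -> Mx t <= Mx t') by (intros; apply mo_mon; auto).
  set (ps := psi_t psi N d x).
  assert (Hps0 : forall t, 0 <= t -> 0 <= ps t) by (intros; apply mi_nonneg; auto).
  assert (Hpsmon : forall t t', 0 <= t -> t <= t' -> ps t' <= ps t).
  { intros t t' Ht Htt. apply mi_mon; auto. }
  assert (Hpsle : forall t i k, 0 <= t -> (i < N)%nat -> (k < N)%nat ->
            ps t <= psi (vnorm d (fun l => x i t l - x k t l))).
  { intros t i k Ht Hi Hk. apply mi_le; auto. split. apply vnorm_nonneg.
    apply Rle_trans with (diam N d x t); [|apply mo_ge; auto; lra].
    unfold diam. eapply Rle_trans; [|apply (fmax_ge _ _ i Hi)].
    apply (fmax_ge _ (fun j => vnorm d (fun l => x i t l - x j t l)) k Hk). }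
  assert (HpsK : forall t, 0 <= t -> ps t <= K).
  { intros t Ht. apply Rle_trans with (psi (vnorm d (fun l => x 0%nat t l - x 0%nat t l))).
    apply Hpsle; auto; lia. apply HpsiK. }
  set (ph := phi psi K T N d x).
  assert (Hph0 : forall t, 0 <= t -> 0 <= ph t).
  { intros t Ht. unfold ph, phi. fold ps ce. apply Rmin_glb. apply Rmult_le_pos; [lra|apply Hps0; auto].
    apply Rdiv_le_0_compat; lra. }
  assert (HphT : forall t, ph t <= ce / T) by (intros; apply Rmin_r).
  assert (Hphps : forall t, c * ph t <= ps t).
  { intros t. assert (ph t <= ce * ps t) by apply Rmin_l.
    apply Rle_trans with (c * (ce * ps t)). apply Rmult_le_compat_l; [unfold c; left; apply exp_pos|auto].
    rewrite <- Rmult_assoc, (Rmult_comm c), Hce. lra. }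
  assert (Hphmon : forall t t', 0 <= t -> t <= t' -> ph t' <= ph t).
  { intros t t' Ht Htt. unfold ph, phi. fold ps ce.
    assert (ce * ps t' <= ce * ps t) by (apply Rmult_le_compat_l; [lra|auto]).
    unfold Rmin; repeat destruct Rle_dec; lra. }
  assert (Hphint : forall a b, t0 <= a -> a <= b -> b <= t1 -> ex_RInt ph a b).
  { intros a b Ha Hab Hb. apply ex_RInt_noninc; auto. intros; apply Hphmon; lra. }
  set (Bi := RInt ph t0 t1).
  assert (HBi0 : 0 <= Bi).
  { unfold Bi. apply RInt_ge_0. lra. apply Hphint; lra. intros; apply Hph0; lra. }
  assert (HBi1 : c * Bi <= 1).
  { assert (Bi <= (t1 - t0) * (ce / T)).
    { apply Rle_trans with (RInt (fun _ => ce / T) t0 t1).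
      apply RInt_le; [lra | apply Hphint; lra | apply ex_RInt_const | intros; apply HphT].
      rewrite RInt_const. simpl. unfold scal; simpl. unfold mult; simpl. lra. }
    assert ((t1 - t0) * (ce / T) <= ce).
    { apply Rle_trans with (T * (ce / T)). apply Rmult_le_compat_r; auto. apply Rdiv_le_0_compat; lra.
      right; field; lra. }
    apply Rle_trans with (c * ce). apply Rmult_le_compat_l. unfold c; left; apply exp_pos. lra. lra. }
  assert (HBi2 : 0 <= 1 - Bi).
  { assert (Bi <= c * Bi) by (rewrite <- (Rmult_1_l Bi) at 1; apply Rmult_le_compat_r; lra). lra. }
  destruct N as [|N']; [lia|].
  assert (HN' : (1 <= N')%nat) by lia.
  replace (S N' - 1)%nat with N' in Hvd by lia.
  unfold diam at 1. apply fmax_le. apply Rmult_le_pos; auto. apply fmax_nonneg.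
  intros i0 Hi0. apply fmax_le. apply Rmult_le_pos; auto. apply fmax_nonneg.
  intros j0 Hj0.
  set (u := fun l => v i0 t1 l - v j0 t1 l).
  set (p := fun i s => sumn d (fun k => u k * v i s k)).
  set (a := fun i j s => alpha s * psi (vnorm d (fun l => x i s l - x j s l))).
  set (dp := fun i s => / INR N' * sumn (S N') (fun j => if Nat.eq_dec j i then 0 else a i j s * (p j s - p i s))).
  assert (Hder : forall s i, t0 < s < t1 -> (i <= N')%nat -> derivable_pt_lim (p i) s (dp i s)).
  { intros s i Hs Hi.
    set (G := fun k j => if Nat.eq_dec j i then 0 else alpha s * psi (vnorm d (fun l => x i s l - x j s l)) * (v j s k - v i s k)).
    assert (Hk : forall k, (k < d)%nat -> derivable_pt_lim (fun s => u k * v i s k) s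
                   (u k * (/ INR N' * sumn (S N') (G k)))).
    { intros k Hk. apply (derivable_pt_lim_scal (fun s => v i s k)).
      apply is_derive_Reals. apply (Hvd (2 * n)%nat). replace (S (2 * n)) with (2 * n + 1)%nat by lia. exact Hs.
      lia. auto. }
    assert (Hp := deriv_sumn d (fun k s => u k * v i s k) _ s Hk).
    assert (E : sumn d (fun k => u k * (/ INR N' * sumn (S N') (G k))) = dp i s).
    { unfold dp.
      rewrite (sumn_ext _ _ (fun k => / INR N' * sumn (S N') (fun j => u k * G k j))).
      2: { intros k _. rewrite (sumn_scal (S N') (u k)). ring. }
      rewrite sumn_scal, sumn_swap. f_equal. apply sumn_ext. intros j _.
      unfold G. destruct Nat.eq_dec.
      - transitivity (sumn d (fun _ => 0)); [apply sumn_ext; intros; ring | apply sumn_zero].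
      - unfold p, a. rewrite <- sumn_minus, <- sumn_scal. apply sumn_ext. intros; ring. }
    rewrite <- E. exact Hp. }
  set (Pf := fun s => mx N' (fun k => p k s) - mn N' (fun k => p k s)).
  assert (HPf0 : forall s, 0 <= Pf s).
  { intros s. unfold Pf. pose proof (mx_ge N' (fun k => p k s) 0 (Nat.le_0_l _)).
    pose proof (mn_le N' (fun k => p k s) 0 (Nat.le_0_l _)). simpl in *. lra. }
  set (G := fun s => c * RInt ph t0 s).
  assert (HFd : forall s, t0 < s < t1 -> forall eps, 0 < eps -> exists del, 0 < del /\
            forall h, 0 < h < del -> Pf (s + h) * exp (G (s + h)) <= Pf s * exp (G s) + eps * h).
  { intros s Hs.
    assert (Hal : alpha s = 1) by (apply (Ha1 n); exact Hs).
    apply (F_dini Pf G (c * ph s) (ps s) s HPf0).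
    - apply Rmult_le_pos. unfold c; left; apply exp_pos. apply Hph0; lra.
    - apply Hphps.
    - apply (P_dini N' p dp (ps s) K s HKpos).
      + intros i Hi. apply Hder; auto.
      + intros i j Hi Hj. apply (deriv_bound N' (fun k l => a k l s) (fun k => p k s) (ps s) K i j HN' Hi Hj).
        apply Hps0; lra. apply HpsK; lra.
        intros k l Hk Hl. unfold a. rewrite Hal, Rmult_1_l. split. apply Hpsle; [lra|lia|lia]. apply HpsiK.
    - exists (t1 - s). split. lra. intros h Hh. unfold G.
      assert (E := RInt_Chasles ph t0 s (s + h) ltac:(apply Hphint; lra) ltac:(apply Hphint; lra)).
      simpl in E. 
      assert (RInt ph s (s + h) <= h * ph s).
      { apply Rle_trans with (RInt (fun _ => ph s) s (s + h)).
        apply RInt_le; [lra | apply Hphint; lra | apply ex_RInt_const | intros; apply Hphmon; lra].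
        rewrite RInt_const. simpl. unfold scal; simpl. unfold mult; simpl. right; ring. }
      rewrite <- E. assert (0 < c) by (unfold c; apply exp_pos).
      assert (c * RInt ph s (s + h) <= c * (h * ph s)) by (apply Rmult_le_compat_l; lra).
      assert (E2 : c * (plus (RInt ph t0 s) (RInt ph s (s + h))) = c * RInt ph t0 s + c * RInt ph s (s + h)).
      { unfold plus; simpl. ring. }
      rewrite E2. lra. }
  assert (Hlip : forall a0 b0, t0 <= a0 <= t1 -> t0 <= b0 <= t1 ->
            Rabs (RInt ph t0 b0 - RInt ph t0 a0) <= (ce / T) * Rabs (b0 - a0)).
  { assert (Hw : forall a0 b0, t0 <= a0 <= t1 -> t0 <= b0 <= t1 -> a0 <= b0 ->
            Rabs (RInt ph t0 b0 - RInt ph t0 a0) <= (ce / T) * Rabs (b0 - a0)).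
    { intros a0 b0 Ha Hb Hab.
      assert (E := RInt_Chasles ph t0 a0 b0 ltac:(apply Hphint; lra) ltac:(apply Hphint; lra)).
      rewrite <- E. unfold plus; simpl.
      assert (Hxy : forall xx yy : R, xx + yy - xx = yy) by (intros; ring). rewrite Hxy.
      rewrite (Rabs_right (b0 - a0)) by lra. rewrite Rmult_comm.
      apply abs_RInt_le_const; auto. apply Hphint; lra.
      intros t Ht. rewrite Rabs_right. apply HphT. apply Rle_ge, Hph0. lra. }
    intros a0 b0 Ha Hb. destruct (Rle_or_lt a0 b0). apply Hw; auto.
    rewrite Rabs_minus_sym, (Rabs_minus_sym b0). apply Hw; auto; lra. }
  set (Fe := fun s => Pf (clamp t0 t1 s) * exp (G (clamp t0 t1 s))).
  assert (HFc : forall c0, continuity_pt Fe c0).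
  { intros c0. unfold Fe.
    apply (continuity_pt_mult (fun s => Pf (clamp t0 t1 s)) (fun s => exp (G (clamp t0 t1 s)))).
    - unfold Pf.
      apply (continuity_pt_minus (fun s => mx N' (fun k => p k (clamp t0 t1 s))) (fun s => mn N' (fun k => p k (clamp t0 t1 s)))).
      + apply (cont_mx N' (fun k s => p k (clamp t0 t1 s))). intros k Hk.
        unfold p. apply (cont_sumn d (fun i s => u i * v k (clamp t0 t1 s) i)). intros i Hi.
        apply (continuity_pt_mult (fun _ => u i) (fun s => v k (clamp t0 t1 s) i)).
        apply continuity_pt_const; intros ? ?; reflexivity.
        apply (cont_clamp (fun s => v k s i)); [apply Hvc; lia|lra|lra].
      + apply (cont_mn N' (fun k s => p k (clamp t0 t1 s))). intros k Hk.
        unfold p. apply (cont_sumn d (fun i s => u i * v k (clamp t0 t1 s) i)). intros i Hi.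
        apply (continuity_pt_mult (fun _ => u i) (fun s => v k (clamp t0 t1 s) i)).
        apply continuity_pt_const; intros ? ?; reflexivity.
        apply (cont_clamp (fun s => v k s i)); [apply Hvc; lia|lra|lra].
    - apply (continuity_pt_comp (fun s => G (clamp t0 t1 s)) exp).
      + apply (cont_lip _ _ (c * (ce / T))). intros y. unfold G.
        rewrite <- Rmult_minus_distr_l, Rabs_mult, (Rabs_right c) by (unfold c; left; apply exp_pos).
        rewrite Rmult_assoc. apply Rmult_le_compat_l. unfold c; left; apply exp_pos.
        eapply Rle_trans. apply Hlip; apply clamp_in; lra.
        apply Rmult_le_compat_l. apply Rdiv_le_0_compat; lra. apply clamp_lip; lra.
      + apply derivable_continuous_pt, derivable_pt_exp. }
  assert (Hmono : Fe t1 <= Fe t0).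
  { apply dini_mono; auto.
    intros s Hs eps He. destruct (HFd s Hs eps He) as [del [Hdel H]].
    exists (Rmin del (t1 - s)). split. apply Rmin_glb_lt; lra.
    intros h Hh. assert (Rmin del (t1 - s) <= del) by apply Rmin_l.
    assert (Rmin del (t1 - s) <= t1 - s) by apply Rmin_r.
    unfold Fe. rewrite !clamp_id by lra. apply H. lra. }
  unfold Fe in Hmono. rewrite !clamp_id in Hmono by lra.
  assert (HG0 : G t0 = 0) by (unfold G; rewrite RInt_point; simpl; unfold zero; simpl; ring).
  rewrite HG0, exp_0, Rmult_1_r in Hmono.
  assert (HG1 : G t1 = c * Bi) by reflexivity.
  rewrite HG1 in Hmono.
  assert (Hup : Pf t1 <= Pf t0 * (1 - Bi)).
  { assert (Pf t1 = Pf t1 * exp (c * Bi) * exp (- (c * Bi))).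
    { rewrite Rmult_assoc, <- exp_plus. replace (c * Bi + - (c * Bi)) with 0 by ring. rewrite exp_0; ring. }
    rewrite H. apply Rle_trans with (Pf t0 * exp (- (c * Bi))).
    apply Rmult_le_compat_r; [left; apply exp_pos | auto].
    apply Rmult_le_compat_l; auto. apply exp_bound; auto. }
  set (nu := vnorm d u).
  assert (Hnu0 : 0 <= nu) by apply vnorm_nonneg.
  assert (Hlow : nu * nu <= Pf t1).
  { unfold nu. rewrite vnorm_sq. unfold Pf.
    pose proof (mx_ge N' (fun k => p k t1) i0 ltac:(lia)). pose proof (mn_le N' (fun k => p k t1) j0 ltac:(lia)).
    cbv beta in *. assert (p i0 t1 - p j0 t1 = sumn d (fun k => u k ^ 2)).
    { unfold p. rewrite <- sumn_minus. apply sumn_ext. intros k _. unfold u. ring. }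
    lra. }
  assert (Hhigh : Pf t0 <= nu * diam (S N') d v t0).
  { unfold Pf. destruct (mx_att N' (fun k => p k t0)) as [ia [Hia Ea]].
    destruct (mn_att N' (fun k => p k t0)) as [ib [Hib Eb]]. rewrite Ea, Eb.
    assert (p ia t0 - p ib t0 = sumn d (fun k => u k * (v ia t0 k - v ib t0 k))).
    { unfold p. rewrite <- sumn_minus. apply sumn_ext. intros k _. ring. }
    rewrite H. eapply Rle_trans. apply cauchy_schwarz. apply Rmult_le_compat_l; auto.
    unfold diam. eapply Rle_trans; [|apply (fmax_ge _ _ ia); lia].
    apply (fmax_ge _ (fun j => vnorm d (fun l => v ia t0 l - v j t0 l)) ib); lia. }
  fold u. fold nu.
  assert (HD0 : 0 <= diam (S N') d v t0) by apply fmax_nonneg.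
  assert (Hc1 : nu * nu <= (1 - Bi) * (nu * diam (S N') d v t0)).
  { eapply Rle_trans. apply Hlow. eapply Rle_trans. apply Hup. rewrite Rmult_comm. apply Rmult_le_compat_l; auto. }
  destruct (Rle_lt_or_eq_dec 0 nu Hnu0) as [Hnu|Hnu].
  - apply (Rmult_le_reg_l nu); auto. 
    replace (nu * ((1 - Bi) * diam (S N') d v t0)) with ((1 - Bi) * (nu * diam (S N') d v t0)) by ring. auto.
  - rewrite <- Hnu. apply Rmult_le_pos; auto.
Qed.
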